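(* Let $M,N$ be positive integers and $C_0,\dots,C_{N-1}\in\{0,1,\dots,M-1\}$ arbitrary. For $p\in\{0,\dots,M-1\}$, $q\in\{0,\dots,N-1\}$ let $\bm\psi_{p,q}\in\mathbb{C}^N$ have entries $[\bm\psi_{p,q}]_n=\frac{1}{\sqrt N}e^{j\frac{2\pi p}{M}C_n+j\frac{2\pi q}{N}n}$, $n=0,\dots,N-1$, let $\bm\Psi_q=[\bm\psi_{0,q},\dots,\bm\psi_{M-1,q}]$ and $\bm\Psi=[\bm\Psi_0,\dots,\bm\Psi_{N-1}]\in\mathbb{C}^{N\times MN}$. Then the spectral norm of $\bm\Psi$ equals $\|\bm\Psi\|_s=\sqrt M$.
   Context: $j$ denotes the imaginary unit; $\|\cdot\|_s$ is the spectral norm (largest singular value). *)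

(* Defs.v *)
From HB Require Import structures.
From mathcomp Require Import all_boot all_order all_algebra.
From mathcomp Require Import all_classical all_reals all_analysis.
From mathcomp Require Import complex.
Set Implicit Arguments. Unset Strict Implicit. Unset Printing Implicit Defensive.
Import Order.TTheory GRing.Theory Num.Theory.
Local Open Scope ring_scope.
Local Open Scope complex_scope.

Definition cisR (R : realType) (x : R) : R[i] := (cos x) +i* (sin x).

Definition ctrmx (R : realType) m n (A : 'M[R[i]]_(m, n)) : 'M[R[i]]_(n, m) :=
  (map_mx (fun z : R[i] => z^*) A)^T.

(* Singular values of A : 'M_(m,n): the square roots of the eigenvalues of
   A A^H (which are real and nonnegative); the spectral norm is the largest. *)
Definition singular_values (R : realType) m n (A : 'M[R[i]]_(m, n)) : set R :=
  [set Num.sqrt (complex.Re l) | l in [set l | eigenvalue (A *m ctrmx A) l]].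

Definition spectral_norm (R : realType) m n (A : 'M[R[i]]_(m, n)) : R :=
  sup (singular_values A).

(* Psi = [Psi_0, ..., Psi_{N-1}], Psi_q = [psi_{0,q}, ..., psi_{M-1,q}];
   column k = q*M + p corresponds to psi_{p,q}, i.e. p = k %% M, q = k %/ M. *)
Definition Psi (R : realType) (M N : nat) (C : 'I_N -> 'I_M) : 'M[R[i]]_(N, M * N) :=
  \matrix_(n < N, k < M * N)
    let p := (k %% M)%N in let q := (k %/ M)%N in
    ((Num.sqrt (N%:R : R))^-1)%:C *
      cisR (2 * pi * p%:R / M%:R * (C n)%:R + 2 * pi * q%:R / N%:R * n%:R).

(* Main.v *)
Require Import Defs.
From HB Require Import structures.
From mathcomp Require Import all_boot all_order all_algebra.
From mathcomp Require Import all_classical all_reals all_analysis.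
From mathcomp Require Import complex.
From mathcomp Require Import ring lra zify.
Import Order.TTheory GRing.Theory Num.Theory.
Local Open Scope ring_scope.
Local Open Scope complex_scope.

Lemma mulcE' (R : rcfType) (a b c d : R) :
  (a +i* b) * (c +i* d) = (a*c - b*d) +i* (a*d + b*c).
Proof. by []. Qed.

Lemma addcE' (R : rcfType) (a b c d : R) :
  (a +i* b) + (c +i* d) = (a + c) +i* (b + d).
Proof. by []. Qed.

Lemma cisRD (R : realType) (x y : R) : cisR x * cisR y = cisR (x + y).
Proof. rewrite /cisR mulcE' cosD sinD; congr (_ +i* _); ring. Qed.

Lemma cisR0 (R : realType) : cisR (0 : R) = 1.
Proof. by rewrite /cisR cos0 sin0. Qed.

Lemma cisRMn (R : realType) (x : R) k : cisR (k%:R * x) = cisR x ^+ k.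
Proof.
elim: k => [|k IH]; first by rewrite mul0r cisR0 expr0.
by rewrite exprS -IH cisRD mulrS; congr cisR; ring.
Qed.

Lemma cisR2pi (R : realType) k : cisR (k%:R * (2 * pi) : R) = 1.
Proof.
rewrite cisRMn (_ : 2 * pi = pi *+ 2); last by rewrite mulr_natl.
by rewrite /cisR cos2pi sin2pi expr1n.
Qed.

Lemma natC (R : rcfType) n : (n%:R : R[i]) = (n%:R) +i* 0.
Proof.
elim: n => [|n IH]; first reflexivity.
by rewrite mulrS IH [in RHS]mulrS (_ : 1 = 1 +i* 0) // addcE' addr0.
Qed.

Lemma geom0 (F : idomainType) (w : F) N : w ^+ N = 1 -> w != 1 ->
  \sum_(q < N) w ^+ q = 0.
Proof.
move=> wN w1; have := subrX1 w N; rewrite wN subrr => /esym/eqP.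
by rewrite mulf_eq0 subr_eq0 (negbTE w1) /= => /eqP.
Qed.

Lemma cisR_neq1 (R : realType) (x : R) : 0 < x < pi *+ 2 -> cisR x != 1.
Proof.
move=> /andP[x0 x2]; apply/negP => /eqP H.
have [Hc Hs] : cos x = 1 /\ sin x = 0 by case: H.
case: (ltgtP x pi) => xp.
- have := @sin_gt0_pi R x; rewrite x0 xp Hs ltxx => /(_ isT) //.
- have := @sin_gt0_pi R (x - pi).
  have -> : sin (x - pi) = - sin x by rewrite sinB cospi sinpi; ring.
  rewrite Hs oppr0 ltxx subr_gt0 xp /=.
  have -> : x - pi < pi by rewrite ltrBlDr -mulr2n.
  by move/(_ isT).
- by move: Hc; rewrite xp cospi => Hc; lra.
Qed.

Lemma cisRN1 (R : realType) (x : R) : cisR x = 1 -> cisR (- x) = 1.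
Proof. by move=> H; rewrite -[cisR (-x)]mulr1 -H cisRD addNr cisR0. Qed.

Lemma w_neq1 (R : realType) N (n n' : 'I_N) : n != n' ->
  cisR (2 * pi * (n%:R - n'%:R) / N%:R : R) != 1.
Proof.
move=> nn.
have N0 : (0 : R) < N%:R by rewrite ltr0n; case: N n {nn n'} => [[]|].
have key : forall a b : nat, (a < b)%N -> (b < N)%N ->
   (0 : R) < 2 * (pi : R) * (b%:R - a%:R) / N%:R < (pi : R) *+ 2.
  move=> a b ab bN.
  have h1 : (0 : R) < b%:R - a%:R by rewrite subr_gt0 ltr_nat.
  have h2 : (b%:R - a%:R : R) < N%:R.
    rewrite ltrBlDr; apply: (lt_le_trans (y := N%:R)); first by rewrite ltr_nat.
    by rewrite lerDl.
  have pi0 := @pi_gt0 R.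
  apply/andP; split; first by apply: divr_gt0 => //; apply: mulr_gt0 => //; lra.
  by rewrite ltr_pdivrMr // -mulr_natl; nra.
case: (ltngtP n n') => h; last by move: nn; rewrite (val_inj h) eqxx.
- apply/negP => /eqP /cisRN1.
  have -> : - (2 * pi * (n%:R - n'%:R) / N%:R) = 2 * pi * (n'%:R - n%:R) / N%:R :> R
    by rewrite -!mulNr; congr (_ * _); ring.
  by apply/eqP/cisR_neq1/key.
- by apply/cisR_neq1/key.
Qed.
Lemma sum_split (V : zmodType) (M N : nat) (hM : (0 < M)%N) (F : nat -> nat -> V) :
  \sum_(k < M * N) F (k %% M)%N (k %/ M)%N = \sum_(q < N) \sum_(p < M) F p q.
Proof.
rewrite -(big_mkord xpredT (fun k => F (k %% M)%N (k %/ M)%N)).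
elim: N => [|N IH]; first by rewrite muln0 big_ord0 big_geq.
rewrite big_ord_recr /= -IH mulnS addnC (big_cat_nat _ (n := M * N)) //=; last by lia.
congr (_ + _).
rewrite -{1}(add0n (M * N)%N) big_addn (addnC (M * N)%N) addnK big_mkord.
apply: eq_bigr => p _.
have hp := ltn_ord p.
by rewrite addnC mulnC modnMDl modn_small // divnMDl // divn_small // addn0.
Qed.
Local Open Scope complex_scope.

Lemma gram (R : realType) (M N : nat) (hM : (0 < M)%N) (hN : (0 < N)%N)
  (C : 'I_N -> 'I_M) :
  Psi R C *m ctrmx (Psi R C) = (M%:R : R[i])%:M.
Proof.
apply/matrixP => n n'; rewrite !mxE.
set s := (Num.sqrt (N%:R : R))^-1.
pose th (m : 'I_N) (k : nat) : R := 2 * pi * (k %% M)%N%:R / M%:R * (C m)%:R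
   + 2 * pi * (k %/ M)%N%:R / N%:R * m%:R.
have E : forall k : 'I_(M * N), Psi R C n k * (ctrmx (Psi R C)) k n'
    = (s * s)%:C * cisR (th n k - th n' k).
  move=> k; rewrite !mxE /= /cisR -/s /th.
  rewrite (_ : s%:C = s +i* 0) // !mulcE'.

  rewrite cosB sinB; congr (_ +i* _); ring.
under eq_bigr do rewrite E.
rewrite -mulr_sumr.
have N0 : (N%:R : R) != 0 by rewrite pnatr_eq0 -lt0n.
have ss : s * s = (N%:R)^-1.
  by rewrite /s -invfM -expr2 sqr_sqrtr // ler0n.
case: (eqVneq n n') => [<-|nn].
  under eq_bigr do rewrite subrr cisR0.
  rewrite sumr_const card_ord mulr1n natC natC.
  rewrite (_ : (s * s)%:C = (s * s) +i* 0) // mulcE' ss natrM.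
  congr (_ +i* _); [by field | ring].
rewrite (_ : (M%:R : R[i]) *+ false = 0) //.
pose x : R := 2 * pi * (n%:R - n'%:R) / N%:R.
pose al (p : nat) : R := 2 * pi * p%:R / M%:R * ((C n)%:R - (C n')%:R).
have := @sum_split _ M N hM (fun p q => cisR (al p) * cisR x ^+ q).
rewrite /= => H.
have E2 : forall i : 'I_(M * N),
    cisR (th n i - th n' i) = cisR (al (i %% M)%N) * cisR x ^+ (i %/ M)%N.
  by move=> i; rewrite -cisRMn cisRD /th /al /x; congr cisR; ring.
rewrite (eq_bigr _ (fun i _ => E2 i)) H.
under eq_bigr do rewrite -mulr_suml.
rewrite -mulr_sumr geom0 ?mulr0 //; last exact: w_neq1.
rewrite -cisRMn (_ : N%:R * x = n%:R * (2 * pi) + - (n'%:R * (2 * pi))).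
  by rewrite -cisRD cisR2pi mul1r; apply: cisRN1; apply: cisR2pi.
by rewrite /x; field.
Qed.

Theorem corollary1 (R : realType) (M N : nat) (hM : (0 < M)%N) (hN : (0 < N)%N)
  (C : 'I_N -> 'I_M) :
  spectral_norm (Psi R C) = Num.sqrt (M%:R : R).
Proof.
have ReM : complex.Re (M%:R : R[i]) = M%:R by rewrite natC.
rewrite /spectral_norm (_ : singular_values _ = [set Num.sqrt (M%:R : R)]%classic) ?sup1 //.
rewrite /singular_values gram //.
apply/seteqP; split => y /=.
  move=> [l /eigenvalueP [v Hv v0] <-].
  rewrite mul_mx_scalar in Hv.
  have : (M%:R - l) *: v = 0 by rewrite scalerBl Hv subrr.
  move/eqP; rewrite scaler_eq0 (negbTE v0) orbF subr_eq0 => /eqP <-.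
  by rewrite ReM.
move=> ->; exists (M%:R); last by rewrite ReM.
apply/eigenvalueP; exists (const_mx 1); first by rewrite mul_mx_scalar.
apply/eqP => /matrixP /(_ 0 (Ordinal hN)); rewrite !mxE => /eqP.
by rewrite oner_eq0.
Qed.
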